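(* Let $G=(V,E)$ be a finite simple graph with $n=|V|$ vertices, and let $\mathbf{L}=\mathbf{D}-\mathbf{A}\in\mathbb{R}^{n\times n}$ be its graph Laplacian. Let $\phi_1,\dots,\phi_n$ be an orthonormal basis of $\mathbb{R}^n$ consisting of eigenvectors of $\mathbf{L}$, with $\mathbf{L}\phi_i=\lambda_i\phi_i$ and $0\le\lambda_1\le\cdots\le\lambda_n$. Let $T>0$, $\varepsilon\in(0,1)$, $M_\varepsilon>0$, and set $\Theta(\varepsilon)=\{i\in\{1,\dots,n\}:\lambda_i\le M_\varepsilon\}$. Let $U_T,U_T^\varepsilon\in\mathbb{R}^n$ satisfy $\|U_T-U_T^\varepsilon\|\le\varepsilon$. Let $$U(t)=\sum_{i=1}^n e^{\lambda_i(T-t)}\langle U_T,\phi_i\rangle\,\phi_i\quad(t\in[0,T])$$ be the solution of $\frac{dU}{dt}(t)+\mathbf{L}U(t)=0$ with $U(T)=U_T$, and define $$\mathbf{P}^{\varepsilon}U^\varepsilon(t)=\sum_{i\in\Theta(\varepsilon)}e^{\lambda_i(T-t)}\langle U_T^\varepsilon,\phi_i\rangle\,\phi_i .$$ Then for every $t\in[0,T]$, $$\|U(t)-\mathbf{P}^{\varepsilon}U^\varepsilon(t)\|\le M_\varepsilon^{-1}\Big\|\frac{d}{dt}U(t)\Big\|+e^{M_\varepsilon(T-t)}\varepsilon .$$ Furthermore, if $M_\varepsilon=\frac{1}{T}\ln(\varepsilon^{-\gamma})$ with $\gamma\in(0,1)$, then for every $t\in[0,T]$, $$\|U(t)-\mathbf{P}^{\varepsilon}U^\varepsilon(t)\|\le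 \frac{T}{\ln(\varepsilon^{-\gamma})}\Big\|\frac{d}{dt}U(t)\Big\|+\varepsilon^{1-\gamma\left(1-\frac{t}{T}\right)}.$$
   Context: $\mathbf{A}$ is the adjacency matrix ($A_{ij}=1$ if $\{x_i,x_j\}\in E$, else $0$), $\mathbf{D}$ is the diagonal degree matrix with $D_{ii}=\sum_j A_{ij}$. $\langle A,B\rangle=A^{\mathrm T}B$ is the standard inner product on $\mathbb{R}^n$ and $\|\cdot\|$ the Euclidean norm. $\mathbf{P}^\varepsilon U^\varepsilon(t)$ is the cut-off (truncated spectral) regularized approximation of $U(t)$ computed from noisy terminal data $U_T^\varepsilon$; $M_\varepsilon$ is the regularization parameter. *)

(* Defs.v *)
From HB Require Import structures.
From mathcomp Require Import all_boot all_order all_algebra.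
From mathcomp Require Import all_classical all_reals all_analysis.
Set Implicit Arguments. Unset Strict Implicit. Unset Printing Implicit Defensive.
Import Order.TTheory GRing.Theory Num.Theory.
Local Open Scope ring_scope.

Section Defs.
Variables (R : realType) (n : nat).

Definition dotv (u v : 'cV[R]_n) : R := (u^T *m v) 0 0.
Definition enorm (v : 'cV[R]_n) : R := Num.sqrt (dotv v v).

Definition simple_graph (e : rel 'I_n) : Prop :=
  (forall i j, e i j = e j i) /\ (forall i, ~~ e i i).

Definition adjacency (e : rel 'I_n) : 'M[R]_n := \matrix_(i, j) (e i j)%:R.
Definition degree_mx (e : rel 'I_n) : 'M[R]_n :=
  \matrix_(i, j) ((i == j)%:R * \sum_k adjacency e i k).
Definition laplacian (e : rel 'I_n) : 'M[R]_n := degree_mx e - adjacency e.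

Definition Usol (lam : 'I_n -> R) (phi : 'I_n -> 'cV[R]_n) (T : R)
  (UT : 'cV[R]_n) (t : R) : 'cV[R]_n :=
  \sum_i (expR (lam i * (T - t)) * dotv UT (phi i)) *: phi i.

Definition Ureg (lam : 'I_n -> R) (phi : 'I_n -> 'cV[R]_n) (T M : R)
  (UTe : 'cV[R]_n) (t : R) : 'cV[R]_n :=
  \sum_(i | lam i <= M) (expR (lam i * (T - t)) * dotv UTe (phi i)) *: phi i.

Definition dtv (U : R -> 'cV[R]_n) (t : R) : 'cV[R]_n :=
  \col_i derive1 (fun s => U s i 0) t.
End Defs.

(* Main.v *)
Require Import Defs.
From HB Require Import structures.
From mathcomp Require Import all_boot all_order all_algebra.
From mathcomp Require Import all_classical all_reals all_analysis.
From mathcomp Require Import ring lra.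
Import Order.TTheory GRing.Theory Num.Theory.
Local Open Scope ring_scope.

Section LA.
Variables (R : realType) (n : nat).
Implicit Types (u v w : 'cV[R]_n).

Lemma dotvE u v : dotv u v = \sum_k u k 0 * v k 0.
Proof. by rewrite /dotv !mxE; apply: eq_bigr => k _; rewrite mxE. Qed.

Lemma dotvC u v : dotv u v = dotv v u.
Proof. by rewrite !dotvE; apply: eq_bigr => k _; rewrite mulrC. Qed.

Lemma dotv_suml (I : finType) (P : pred I) (F : I -> 'cV[R]_n) v :
  dotv (\sum_(i | P i) F i) v = \sum_(i | P i) dotv (F i) v.
Proof.
rewrite dotvE; under eq_bigr => k _ do rewrite summxE mulr_suml.
rewrite exchange_big /=; apply: eq_bigr => i _; by rewrite dotvE.
Qed.

Lemma dotvZl a u v : dotv (a *: u) v = a * dotv u v.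
Proof. by rewrite !dotvE mulr_sumr; apply: eq_bigr => k _; rewrite mxE mulrA. Qed.

Lemma dotvDl u w v : dotv (u + w) v = dotv u v + dotv w v.
Proof. by rewrite !dotvE -big_split; apply: eq_bigr => k _; rewrite mxE mulrDl. Qed.

Lemma dotvNl u v : dotv (- u) v = - dotv u v.
Proof. by rewrite -scaleN1r dotvZl mulN1r. Qed.

Lemma dotvBl u w v : dotv (u - w) v = dotv u v - dotv w v.
Proof. by rewrite dotvDl dotvNl. Qed.

Lemma dotvBr u w v : dotv v (u - w) = dotv v u - dotv v w.
Proof. by rewrite dotvC dotvBl !(dotvC v). Qed.

Lemma dotv_ge0 v : 0 <= dotv v v.
Proof. by rewrite dotvE sumr_ge0 // => k _; rewrite -expr2 sqr_ge0. Qed.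

Variable phi : 'I_n -> 'cV[R]_n.
Hypothesis orth : forall i j, dotv (phi i) (phi j) = (i == j)%:R.

Lemma dotv_combr v (b : 'I_n -> R) :
  dotv v (\sum_j b j *: phi j) = \sum_j b j * dotv v (phi j).
Proof. by rewrite dotvC dotv_suml; apply: eq_bigr => j _; rewrite dotvZl dotvC. Qed.

Lemma dotv_comb (a b : 'I_n -> R) :
  dotv (\sum_i a i *: phi i) (\sum_j b j *: phi j) = \sum_i a i * b i.
Proof.
rewrite dotv_suml; apply: eq_bigr => i _; rewrite dotvZl dotv_combr; congr (_ * _).
rewrite (bigD1 i) //= orth eqxx mulr1 big1 ?addr0 // => j /negbTE.
by rewrite orth eq_sym => ->; rewrite mulr0.
Qed.

Lemma enorm_comb (a : 'I_n -> R) :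
  enorm (\sum_i a i *: phi i) = Num.sqrt (\sum_i a i ^+ 2).
Proof. by rewrite /enorm dotv_comb; under eq_bigr do rewrite -expr2. Qed.

Lemma bessel v : \sum_i dotv v (phi i) ^+ 2 <= dotv v v.
Proof.
set c := fun i => dotv v (phi i).
have := dotv_ge0 (v - \sum_i c i *: phi i).
rewrite dotvBl !dotvBr dotv_comb dotv_combr (dotvC _ v) dotv_combr.
have -> : \sum_j c j * dotv v (phi j) = \sum_i c i ^+ 2.
  by apply: eq_bigr => i _; rewrite expr2.

lra.
Qed.
End LA.

Lemma der_exp (R : realType) (a T c t : R) :
  is_derive t 1 (fun s => expR (a * (T - s)) * c) (- a * expR (a * (T - t)) * c).
Proof.
have h1 : is_derive t (1:R) (fun s : R => a * (T - s)) (- a).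
  have -> : (fun s : R => a * (T - s)) = (fun s => a * T + (- a) * s).
    by apply/funext => s; ring.
  apply: is_derive_eq.
  by rewrite add0r mul1r; apply: mulr1.
have h2 : is_derive t (1:R) (expR \o (fun s : R => a * (T - s))) (expR (a * (T - t)) * - a).
  by apply: is_derive1_comp.
have h3 := @is_deriveM R R _ (cst c) t 1 _ 0 h2 (is_derive_cst c t 1).
apply: is_derive_eq. 
rewrite /= scaler0 add0r; change (c * (expR (a*(T-t)) * -a) = - a * expR (a * (T - t)) * c); ring.
Qed.


Lemma dtv_Usol (R : realType) n (lam : 'I_n -> R) phi T UT t :
  dtv (Usol lam phi T UT) t =
  \sum_i (- lam i * expR (lam i * (T - t)) * dotv UT (phi i)) *: phi i.
Proof.
apply/matrixP => i j; rewrite (ord1 j) !mxE summxE.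
have -> : (fun s => Usol lam phi T UT s i 0) =
   \sum_k (fun s => expR (lam k * (T - s)) * (dotv UT (phi k) * phi k i 0)).
  rewrite fct_sumE; apply/funext => s; rewrite /Usol summxE.
  by apply: eq_bigr => k _; rewrite !mxE mulrA.
rewrite derive1E.
have H := @is_derive_sum R R R n _ t 1 _ (fun k => @der_exp R (lam k) T (dotv UT (phi k) * phi k i 0) t).
rewrite (@derive_val _ _ _ _ _ _ _ H).
by apply: eq_bigr => k _; rewrite !mxE !mulrA.
Qed.

Lemma sqrt_le_of (R : realType) (s z : R) : 0 <= z -> s <= z ^+ 2 -> Num.sqrt s <= z.
Proof.
move=> z0 h; rewrite -(ger0_norm z0) -sqrtr_sqr; exact: ler_wsqrtr.
Qed.

Lemma part1 (R : realType) (n : nat) 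
  (lam : 'I_n -> R) (phi : 'I_n -> 'cV[R]_n) (T eps M : R) (UT UTe : 'cV[R]_n) :
  (forall i j, dotv (phi i) (phi j) = (i == j)%:R) ->
  0 < eps -> 0 < M ->
  enorm (UT - UTe) <= eps ->
  (forall t, 0 <= t <= T ->
     enorm (Usol lam phi T UT t - Ureg lam phi T M UTe t)
       <= M^-1 * enorm (dtv (Usol lam phi T UT) t) + expR (M * (T - t)) * eps).
Proof.
move=> orth e0 M0 hUT t /andP[t0 tT].
rewrite dtv_Usol enorm_comb //.
set S := \sum_i _.
set E := fun i => expR (lam i * (T - t)).
set c := fun i => dotv UT (phi i).
set d := fun i => dotv (UT - UTe) (phi i).
have eqdiff : Usol lam phi T UT t - Ureg lam phi T M UTe t =
   \sum_i (if lam i <= M then E i * d i else E i * c i) *: phi i.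
  rewrite /Usol /Ureg (big_mkcond (fun i => lam i <= M)) /= -sumrB; apply: eq_bigr => i _.
  case: ifP => _; last by rewrite subr0.
  by rewrite -scalerBl -mulrBr /d dotvBl.
rewrite eqdiff enorm_comb //.
set EM := expR (M * (T - t)).
have S0 : 0 <= S by rewrite sumr_ge0 // => i _; rewrite sqr_ge0.
have EM0 : 0 < EM by rewrite expR_gt0.
have X0 : 0 <= M^-1 * Num.sqrt S by rewrite mulr_ge0 // ?invr_ge0 ?ltW // sqrtr_ge0.
have Y0 : 0 <= EM * eps by rewrite mulr_ge0 // ltW.
apply: sqrt_le_of; first by rewrite addr_ge0.
set A := \sum_i (if lam i <= M then 0 else (E i * c i) ^+ 2).
set B := \sum_i (if lam i <= M then (E i * d i) ^+ 2 else 0).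
have -> : \sum_i (if lam i <= M then E i * d i else E i * c i) ^+ 2 = A + B.
  rewrite /A /B -big_split; apply: eq_bigr => i _.
  by case: ifP => _ /=; rewrite ?add0r ?addr0.
have hA : A <= (M^-1 * Num.sqrt S) ^+ 2.
  rewrite exprMn sqr_sqrtr // /S mulr_sumr; apply: ler_sum => i _.
  case: ifP => hi; first by rewrite mulr_ge0 // ?sqr_ge0 // exprn_ge0 // invr_ge0 ltW.
  have lM : M < lam i by rewrite ltNge hi.
  have m1 : 1 <= M^-1 * lam i.
    rewrite -(mulVf (lt0r_neq0 M0)) ler_pM2l ?invr_gt0 //; exact: ltW.
  have q0 : 0 <= (E i * c i) ^+ 2 by apply: sqr_ge0.
  have -> : M^-1 ^+ 2 * (- lam i * E i * c i) ^+ 2 = (M^-1 * lam i) ^+ 2 * (E i * c i) ^+ 2.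
    by ring.
  by rewrite -[X in X <= _]mul1r ler_wpM2r // exprn_ege1.
have hB : B <= (EM * eps) ^+ 2.
  apply: (@le_trans _ _ (EM ^+ 2 * dotv (UT - UTe) (UT - UTe))).
    apply: (@le_trans _ _ (EM ^+ 2 * \sum_i d i ^+ 2)); last first.
      apply: ler_wpM2l; [by rewrite exprn_ge0 // ltW | exact: (@bessel _ _ _ orth)].
    rewrite mulr_sumr; apply: ler_sum => i _.
    case: ifP => hi; last by rewrite mulr_ge0 // sqr_ge0.
    have Ei : E i <= EM by rewrite /E /EM ler_expR ler_wpM2r // subr_ge0.
    have Ei0 : 0 <= E i by apply: expR_ge0.
    have d0 : 0 <= d i ^+ 2 by apply: sqr_ge0.
    rewrite exprMn; apply: ler_wpM2r => //.
    by rewrite lerXn2r // ?nnegrE // ltW.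
  rewrite exprMn; apply: ler_wpM2l; first by rewrite exprn_ge0 // ltW.
  have hd := @dotv_ge0 _ _ (UT - UTe).
  have hn : enorm (UT - UTe) ^+ 2 = dotv (UT - UTe) (UT - UTe) by rewrite sqr_sqrtr.
  have en0 : 0 <= enorm (UT - UTe) by apply: sqrtr_ge0.
  rewrite -hn; nra.
nra.
Qed.

Theorem theorem4 (R : realType) (n : nat) (e : rel 'I_n)
  (lam : 'I_n -> R) (phi : 'I_n -> 'cV[R]_n) (T eps M : R) (UT UTe : 'cV[R]_n) :
  simple_graph e ->
  (forall i j, dotv (phi i) (phi j) = (i == j)%:R) ->
  (forall i, laplacian R e *m phi i = lam i *: phi i) ->
  (forall i j : 'I_n, (i <= j)%N -> lam i <= lam j) ->
  (forall i, 0 <= lam i) ->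
  0 < T -> 0 < eps < 1 -> 0 < M ->
  enorm (UT - UTe) <= eps ->
  (forall t, 0 <= t <= T ->
     enorm (Usol lam phi T UT t - Ureg lam phi T M UTe t)
       <= M^-1 * enorm (dtv (Usol lam phi T UT) t) + expR (M * (T - t)) * eps)
  /\
  (forall gamma, 0 < gamma < 1 -> M = ln (eps `^ (- gamma)) / T ->
   forall t, 0 <= t <= T ->
     enorm (Usol lam phi T UT t - Ureg lam phi T M UTe t)
       <= T / ln (eps `^ (- gamma)) * enorm (dtv (Usol lam phi T UT) t)
          + eps `^ (1 - gamma * (1 - t / T))).
Proof.
move=> _ orth _ _ _ T0 /andP[e0 e1] M0 hUT.
have P1 := @part1 R n lam phi T eps M UT UTe orth e0 M0 hUT.
split=> // gamma _ hM t ht.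
have -> : T / ln (eps `^ (- gamma)) = M^-1 by rewrite hM invf_div.
have -> : eps `^ (1 - gamma * (1 - t / T)) = expR (M * (T - t)) * eps.
  have epsE : eps = expR (ln eps) by rewrite lnK // posrE.
  rewrite hM ln_powR {1 3}epsE -expRM -expRD; congr expR.
  by field; rewrite lt0r_neq0.
exact: P1.
Qed.
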